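(* Let $m,n,p,q,r,s,t$ be arbitrary integers. Let $$A(x_1,x_2,x_3,x_4)=\begin{bmatrix}tx_1 & x_2 & tx_3 & x_4\\ mx_1+nx_2 & -tx_1 & mx_3+nx_4 & -tx_3\\ -qtx_3 & -qx_4 & tx_1+ptx_3 & x_2+px_4\\ -q(mx_3+nx_4) & qtx_3 & mx_1+nx_2+p(mx_3+nx_4) & -tx_1-ptx_3\end{bmatrix}$$ and $$P(x_1,\dots,x_8)=\begin{bmatrix}A(x_1,\dots,x_4) & A(x_5,\dots,x_8)\\ -sA(x_5,\dots,x_8) & A(x_1,\dots,x_4)+rA(x_5,\dots,x_8)\end{bmatrix}.$$ Then there exist trilinear forms $w_1,\dots,w_8$ in independent variables $x_i,y_i,z_i$ ($i=1,\dots,8$), with coefficients integer polynomials in the parameters, such that $P(x)P(y)P(z)=P(w)$. Consequently the octonary octic form $f=\det P$ satisfies $f(x_1,\dots,x_8)f(y_1,\dots,y_8)f(z_1,\dots,z_8)=f(w_1,\dots,w_8)$ identically. *)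

(* Defs.v *)
From HB Require Import structures.
From mathcomp Require Import all_boot all_order all_algebra.
From mathcomp Require Import mpoly.
Set Implicit Arguments. Unset Strict Implicit. Unset Printing Implicit Defensive.
Import Order.TTheory GRing.Theory Num.Theory.
Local Open Scope ring_scope.

Definition prm_of (m n p q r s t : int) : 'I_7 -> int :=
  fun i => nth 0 [:: m; n; p; q; r; s; t] i.

Definition Amat (m n p q t : int) (x : 'I_4 -> int) : 'M[int]_4 :=
  let x1 := x 0%R in let x2 := x 1%R in let x3 := x 2%R in let x4 := x 3%R in
  let rows : seq (seq int) :=
    [:: [:: t * x1; x2; t * x3; x4];
        [:: m * x1 + n * x2; - (t * x1); m * x3 + n * x4; - (t * x3)];
        [:: - (q * t * x3); - (q * x4); t * x1 + p * t * x3; x2 + p * x4];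
        [:: - (q * (m * x3 + n * x4)); q * t * x3;
            m * x1 + n * x2 + p * (m * x3 + n * x4); - (t * x1) - p * t * x3]] in
  \matrix_(i < 4, j < 4) nth 0 (nth [::] rows i) j.

(* The 8x8 matrix P(x1,...,x8); x : 'I_8 -> int, x (i) = x_(i+1). *)
Definition Pmat (m n p q r s t : int) (x : 'I_8 -> int) : 'M[int]_(4 + 4) :=
  let A1 := Amat m n p q t (fun i : 'I_4 => x (lshift 4 i)) in
  let A2 := Amat m n p q t (fun i : 'I_4 => x (rshift 4 i)) in
  block_mx A1 A2 (- (s *: A2)) (A1 + r *: A2).

Definition fform (m n p q r s t : int) (x : 'I_8 -> int) : int :=
  \det (Pmat m n p q r s t x).

Definition trilin (c : 'I_8 -> 'I_8 -> 'I_8 -> 'I_8 -> {mpoly int[7]})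
  (prm : 'I_7 -> int) (x y z : 'I_8 -> int) : 'I_8 -> int :=
  fun l => \sum_(i < 8) \sum_(j < 8) \sum_(k < 8)
             (c i j k l).@[prm] * x i * y j * z k.

(* Main.v *)
Require Import Defs.
From HB Require Import structures.
From mathcomp Require Import all_boot all_order all_algebra.
From mathcomp Require Import mpoly.
From mathcomp Require Import ring.
From Stdlib Require Import FunctionalExtensionality.
Import GRing.Theory.
Local Open Scope ring_scope.

Section G.
Variable R : comNzRingType.
Definition wm (p q : R) (u v : R * R) : R * R :=
  (u.1 * v.1 - q * (u.2 * v.2), u.1 * v.2 + u.2 * v.1 + p * (u.2 * v.2)).
Definition wa (u v : R * R) : R * R := (u.1 + v.1, u.2 + v.2).
Definition ws (k : R) (u : R * R) : R * R := (k * u.1, k * u.2).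

Definition g4 (m n p q t : R) (a b c : 'I_4 -> R) (i : 'I_4) : R :=
  let M3 u v w := wm p q (wm p q u v) w in
  let A1 := (a 0%R, a 2%R) in let B1 := (a 1%R, a 3%R) in
  let A2 := (b 0%R, b 2%R) in let B2 := (b 1%R, b 3%R) in
  let A3 := (c 0%R, c 2%R) in let B3 := (c 1%R, c 3%R) in
  let ga := wa (ws (t * t) (M3 A1 A2 A3)) (wa (ws n (M3 B1 B2 A3))
        (wa (ws m (M3 A1 B2 A3)) (wa (ws (- n) (M3 B1 A2 B3)) (ws n (M3 A1 B2 B3))))) in
  let de := wa (ws (t * t) (M3 A1 A2 B3)) (wa (ws (- (t * t)) (M3 A1 B2 A3))
        (wa (ws m (M3 B1 A2 B3)) (wa (ws (t * t) (M3 B1 A2 A3)) (ws n (M3 B1 B2 B3))))) in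
  match nat_of_ord i with 0 => ga.1 | 1 => de.1 | 2 => ga.2 | _ => de.2 end.
End G.
Arguments wm {R}. Arguments wa {R}. Arguments ws {R}. Arguments g4 {R}.

Lemma A3 (m n p q t : int) a b c :
  Amat m n p q t a *m Amat m n p q t b *m Amat m n p q t c = Amat m n p q t (g4 m n p q t a b c).
Proof.
apply/matrixP => i j.
rewrite !mxE.
rewrite !big_ord_recr !big_ord0 /=.
rewrite !mxE !big_ord_recr !big_ord0 /= !mxE.
case: i => [[|[|[|[|i]]]] Hi] //=; case: j => [[|[|[|[|j]]]] Hj] //= ;
 rewrite /g4 /=; ring.
Qed.

Definition o7 (k : nat) (H : (k < 7)%N) : 'I_7 := Ordinal H.

Section GG.
Variable R : comNzRingType.
Variables (m n p q r s t : R).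
Variables (x y z : 'I_8 -> R).
Let x1 := fun i : 'I_4 => x (lshift 4 i). Let x2 := fun i : 'I_4 => x (rshift 4 i).
Let y1 := fun i : 'I_4 => y (lshift 4 i). Let y2 := fun i : 'I_4 => y (rshift 4 i).
Let z1 := fun i : 'I_4 => z (lshift 4 i). Let z2 := fun i : 'I_4 => z (rshift 4 i).
Let g := g4 m n p q t.
Definition Gl (i : 'I_4) : R :=
  g x1 y1 z1 i - s * g x2 y2 z1 i - s * g x1 y2 z2 i - s * g x2 y1 z2 i
  - r * s * g x2 y2 z2 i.
Definition Gr (i : 'I_4) : R :=
  g x1 y1 z2 i - s * g x2 y2 z2 i + g x1 y2 z1 i + g x2 y1 z1 i
  + r * g x2 y2 z1 i + r * g x1 y2 z2 i + r * g x2 y1 z2 i + r * r * g x2 y2 z2 i.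
Definition Gfull (l : 'I_8) : R :=
  if (l < 4)%N then Gl (inord l) else Gr (inord (l - 4)).
End GG.
Arguments Gl {R}. Arguments Gr {R}. Arguments Gfull {R}.

Lemma Gfull_l {R : comNzRingType} (m n p q r s t : R) x y z (i : 'I_4) :
  Gfull m n p q r s t x y z (lshift 4 i) = Gl m n p q r s t x y z i.
Proof. by rewrite /Gfull /= ltn_ord inord_val. Qed.

Lemma Gfull_r {R : comNzRingType} (m n p q r s t : R) x y z (i : 'I_4) :
  Gfull m n p q r s t x y z (rshift 4 i) = Gr m n p q r s t x y z i.
Proof. by rewrite /Gfull /= addKn inord_val. Qed.

Lemma Pmat_mul (m n p q r s t : int) x y z :
  Pmat m n p q r s t x *m Pmat m n p q r s t y *m Pmat m n p q r s t z =
  Pmat m n p q r s t (Gfull m n p q r s t x y z).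
Proof.
have -> : Pmat m n p q r s t (Gfull m n p q r s t x y z) =
  block_mx (Amat m n p q t (Gl m n p q r s t x y z)) (Amat m n p q t (Gr m n p q r s t x y z))
   (- (s *: Amat m n p q t (Gr m n p q r s t x y z)))
   (Amat m n p q t (Gl m n p q r s t x y z) + r *: Amat m n p q t (Gr m n p q r s t x y z)).
  rewrite /Pmat.
  have -> : (fun i : 'I_4 => Gfull m n p q r s t x y z (lshift 4 i)) = Gl m n p q r s t x y z.
    by apply: functional_extensionality => i; rewrite Gfull_l.
  have -> : (fun i : 'I_4 => Gfull m n p q r s t x y z (rshift 4 i)) = Gr m n p q r s t x y z.
    by apply: functional_extensionality => i; rewrite Gfull_r.
  by [].
rewrite /Pmat !mulmx_block.
congr block_mx;
do 3 rewrite ?(mulmxDl, mulmxDr, mulmxN, mulNmx) -?scalemxAl -?scalemxAr;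
rewrite ?mulmxA !A3;
apply/matrixP => i j; rewrite !mxE;
case: i => [[|[|[|[|i]]]] Hi] //=; case: j => [[|[|[|[|j]]]] Hj] //=;
rewrite /Gl /Gr; ring.

Qed.



Definition dl {R : comNzRingType} (i : 'I_8) : 'I_8 -> R := fun a => ((a == i) : nat)%:R.

Definition linF (F : ('I_8 -> int) -> int) :=
  forall u v x x' w, (forall a, w a = u * x a + v * x' a) -> F w = u * F x + v * F x'.

Lemma lin_decomp F : linF F -> forall x, F x = \sum_(i < 8) x i * F (dl i).
Proof.
move=> HF x.
have gen : forall (sq : seq 'I_8) w, (forall a, w a = \sum_(i <- sq) x i * dl i a) ->
   F w = \sum_(i <- sq) x i * F (dl i).
  elim=> [|i sq IH] w Hw.
    rewrite big_nil (HF 0 0 w w w) ?mul0r ?addr0 // => a.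
    by rewrite Hw big_nil mul0r addr0.
  rewrite big_cons (HF (x i) 1 (dl i) (fun b => \sum_(j <- sq) x j * dl j b) w).
    by rewrite mul1r (IH _ (fun a => erefl)).
  by move=> a; rewrite Hw big_cons mul1r.
apply: gen => a.
rewrite (bigD1 a) //= big1 ?addr0 /dl ?eqxx ?mulr1 //.
by move=> i /negbTE; rewrite eq_sym => ->; rewrite mulr0.
Qed.

Ltac gcase := rewrite /Gfull; case: ifP => _; rewrite /Gl /Gr /g4;
  case: (nat_of_ord _) => [|[|[|?]]] /=.

Section Lin4.
Variables (m n p q t u v : int).
Lemma g4_la a a' w b c' : (forall i, w i = u * a i + v * a' i) -> forall i,
  g4 m n p q t w b c' i = u * g4 m n p q t a b c' i + v * g4 m n p q t a' b c' i.
Proof. move=> Hw i; rewrite /g4; case: (nat_of_ord i) => [|[|[|?]]] /=; rewrite !Hw; ring. Qed.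
Lemma g4_lb a b b' w c' : (forall i, w i = u * b i + v * b' i) -> forall i,
  g4 m n p q t a w c' i = u * g4 m n p q t a b c' i + v * g4 m n p q t a b' c' i.
Proof. move=> Hw i; rewrite /g4; case: (nat_of_ord i) => [|[|[|?]]] /=; rewrite !Hw; ring. Qed.
Lemma g4_lc a b c' c'' w : (forall i, w i = u * c' i + v * c'' i) -> forall i,
  g4 m n p q t a b w i = u * g4 m n p q t a b c' i + v * g4 m n p q t a b c'' i.
Proof. move=> Hw i; rewrite /g4; case: (nat_of_ord i) => [|[|[|?]]] /=; rewrite !Hw; ring. Qed.
End Lin4.

Lemma lin_x (m n p q r s t : int) y z l : linF (fun x => Gfull m n p q r s t x y z l).
Proof.
move=> u v x x' w Hw /=.
have E1 b c' i := @g4_la m n p q t u v _ _ _ b c' (fun i : 'I_4 => Hw (lshift 4 i)) i.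
have E2 b c' i := @g4_la m n p q t u v _ _ _ b c' (fun i : 'I_4 => Hw (rshift 4 i)) i.
rewrite /Gfull; case: ifP => _; rewrite /Gl /Gr !E1 !E2; ring.
Qed.
Lemma lin_y (m n p q r s t : int) x z l : linF (fun y => Gfull m n p q r s t x y z l).
Proof.
move=> u v y y' w Hw /=.
have E1 a c' i := @g4_lb m n p q t u v a _ _ _ c' (fun i : 'I_4 => Hw (lshift 4 i)) i.
have E2 a c' i := @g4_lb m n p q t u v a _ _ _ c' (fun i : 'I_4 => Hw (rshift 4 i)) i.
rewrite /Gfull; case: ifP => _; rewrite /Gl /Gr !E1 !E2; ring.
Qed.
Lemma lin_z (m n p q r s t : int) x y l : linF (fun z => Gfull m n p q r s t x y z l).
Proof.
move=> u v z z' w Hw /=.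
have E1 a b i := @g4_lc m n p q t u v a b _ _ _ (fun i : 'I_4 => Hw (lshift 4 i)) i.
have E2 a b i := @g4_lc m n p q t u v a b _ _ _ (fun i : 'I_4 => Hw (rshift 4 i)) i.
rewrite /Gfull; case: ifP => _; rewrite /Gl /Gr !E1 !E2; ring.
Qed.

Definition c : 'I_8 -> 'I_8 -> 'I_8 -> 'I_8 -> {mpoly int[7]} :=
  fun i j k l => Gfull 'X_(o7 0 isT) 'X_(o7 1 isT) 'X_(o7 2 isT) 'X_(o7 3 isT)
     'X_(o7 4 isT) 'X_(o7 5 isT) 'X_(o7 6 isT) (dl i) (dl j) (dl k) l.

Lemma g4_morph (R S : comNzRingType) (f : {rmorphism R -> S}) m n p q t a b c'
   m' n' p' q' t' a' b' c'' :
  f m = m' -> f n = n' -> f p = p' -> f q = q' -> f t = t' ->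
  (forall i, f (a i) = a' i) -> (forall i, f (b i) = b' i) -> (forall i, f (c' i) = c'' i) ->
  forall i, f (g4 m n p q t a b c' i) = g4 m' n' p' q' t' a' b' c'' i.
Proof.
move=> Hm Hn Hp Hq Ht Ha Hb Hc i; rewrite /g4.
case: (nat_of_ord i) => [|[|[|?]]] /=;
by rewrite !(rmorphD, rmorphB, rmorphM, rmorphN) Hm Hn Hp Hq Ht !Ha !Hb !Hc.
Qed.

Arguments g4_morph {R S} f {m n p q t a b c' m' n' p' q' t' a' b' c''}.

Lemma meval_dl (v : 'I_7 -> int) (i a : 'I_8) : (dl i a : {mpoly int[7]}).@[v] = dl i a.
Proof. by rewrite /dl rmorph_nat. Qed.

Section GM.
Variables (R S : comNzRingType) (f : {rmorphism R -> S}).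
Variables (m n p q r s t : R) (m' n' p' q' r' s' t' : S).
Variables (x y z : 'I_8 -> R) (x' y' z' : 'I_8 -> S).
Hypotheses (Hm : f m = m') (Hn : f n = n') (Hp : f p = p') (Hq : f q = q')
  (Hr : f r = r') (Hs : f s = s') (Ht : f t = t').
Hypotheses (Hx : forall a, f (x a) = x' a) (Hy : forall a, f (y a) = y' a)
  (Hz : forall a, f (z a) = z' a).

Lemma Gfull_morph l : f (Gfull m n p q r s t x y z l) = Gfull m' n' p' q' r' s' t' x' y' z' l.
Proof.
have E := g4_morph f Hm Hn Hp Hq Ht.
have Exl : forall i : 'I_4, f (x (lshift 4 i)) = x' (lshift 4 i) by move=> i; apply: Hx.
have Exr : forall i : 'I_4, f (x (rshift 4 i)) = x' (rshift 4 i) by move=> i; apply: Hx.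
have Eyl : forall i : 'I_4, f (y (lshift 4 i)) = y' (lshift 4 i) by move=> i; apply: Hy.
have Eyr : forall i : 'I_4, f (y (rshift 4 i)) = y' (rshift 4 i) by move=> i; apply: Hy.
have Ezl : forall i : 'I_4, f (z (lshift 4 i)) = z' (lshift 4 i) by move=> i; apply: Hz.
have Ezr : forall i : 'I_4, f (z (rshift 4 i)) = z' (rshift 4 i) by move=> i; apply: Hz.
rewrite /Gfull; case: ifP => _; set i := inord _; clearbody i;
rewrite /Gl /Gr !(rmorphD, rmorphB, rmorphN, rmorphM) ?Hr ?Hs;
by rewrite !(E _ _ _ _ _ _ Exl Eyl Ezl, E _ _ _ _ _ _ Exl Eyl Ezr, E _ _ _ _ _ _ Exl Eyr Ezl,
  E _ _ _ _ _ _ Exl Eyr Ezr, E _ _ _ _ _ _ Exr Eyl Ezl, E _ _ _ _ _ _ Exr Eyl Ezr,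
  E _ _ _ _ _ _ Exr Eyr Ezl, E _ _ _ _ _ _ Exr Eyr Ezr).
Qed.
End GM.

Lemma c_eval v i j k l : (c i j k l).@[v] =
  Gfull (v (o7 0 isT)) (v (o7 1 isT)) (v (o7 2 isT)) (v (o7 3 isT))
     (v (o7 4 isT)) (v (o7 5 isT)) (v (o7 6 isT)) (dl i) (dl j) (dl k) l.
Proof.
apply: Gfull_morph => *; first [exact: mevalXU | exact: meval_dl].
Qed.

Lemma trilinE (m n p q r s t : int) x y z l :
  trilin c (prm_of m n p q r s t) x y z l = Gfull m n p q r s t x y z l.
Proof.
rewrite /trilin.
transitivity (\sum_(i<8) \sum_(j<8) \sum_(k<8)
   Gfull m n p q r s t (dl i) (dl j) (dl k) l * x i * y j * z k).
  apply: eq_bigr => i _; apply: eq_bigr => j _; apply: eq_bigr => k _.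
  by rewrite c_eval.
have H1 := lin_decomp _ (lin_x m n p q r s t y z l) x; cbv beta in H1; rewrite H1.
apply: eq_bigr => i _.
have H2 := lin_decomp _ (lin_y m n p q r s t (dl i) z l) y; cbv beta in H2; rewrite H2.
rewrite big_distrr; apply: eq_bigr => j _.
have H3 := lin_decomp _ (lin_z m n p q r s t (dl i) (dl j) l) z; cbv beta in H3; rewrite H3.
(rewrite !big_distrr; apply: eq_bigr => k _ /=;
ring).
Qed.

Theorem mainTheorem14 :
  exists c : 'I_8 -> 'I_8 -> 'I_8 -> 'I_8 -> {mpoly int[7]},
    forall (m n p q r s t : int) (x y z : 'I_8 -> int),
      let w := trilin c (prm_of m n p q r s t) x y z in
      Pmat m n p q r s t x *m Pmat m n p q r s t y *m Pmat m n p q r s t z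
        = Pmat m n p q r s t w /\
      fform m n p q r s t x * fform m n p q r s t y * fform m n p q r s t z
        = fform m n p q r s t w.
Proof.
exists c => m n p q r s t x y z w.
have Hw : w = Gfull m n p q r s t x y z.
  by apply: functional_extensionality => l; rewrite /w trilinE.
have HP := Pmat_mul m n p q r s t x y z.
split; first by rewrite Hw.
by rewrite /fform -!det_mulmx Hw HP.
Qed.
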